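(* Assume $r$ is not a codeword of the GRS code (equivalently $\deg R\ge k$). Let $B\in\mathbb F_q[X]^{(\ell+1)\times(\ell+1)}$ represent a basis of $M_{s,\ell}$ such that $BW_\ell$ is in weak Popov form. Let $C^{\mathrm I}$ be the $(\ell+2)\times(\ell+2)$ matrix whose first $\ell+1$ rows are the rows of $B$ each extended by a final zero entry, and whose last row is the coefficient vector (of length $\ell+2$) of $Y^{\ell-s+1}(Y-R(X))^s$. Then $\Delta(C^{\mathrm I}W_{\ell+1})=s(\deg R-k+1)\le s(n-k)$.
   Context: Let $\mathbb F_q$ be a finite field, $1\le k<n<q$, $\alpha_0,\dots,\alpha_{n-1}$ distinct nonzero elements of $\mathbb F_q$, $w_0,\dots,w_{n-1}$ nonzero elements of $\mathbb F_q$. The GRS code is $\{(w_0f(\alpha_0),\dots,w_{n-1}f(\alpha_{n-1})): f\in\mathbb F_q[X],\deg f<k\}$. Let $r\in\mathbb F_q^n$, $r_i'=r_i/w_i$, and $R$ the unique polynomial of degree $<n$ with $R(\alpha_i)=r_i'$. For positive integers $s\le\ell$, $M_{s,\ell}$ is the $\mathbb F_q[X]$-module of all $Q\in\mathbb F_q[X,Y]$ of $Y$-degree at most $\ell$ such that for each $i$, $Q(X+\alpha_i,Y+r_i')$ has no monomials of total degree less than $s$. A polynomial $\sum_{t}Q_t(X)Y^t$ has coefficient vector $(Q_0,Q_1,\dots)$; a matrix represents a basis if its rows are the coefficient vectors of the basis elements. $W_\ell=\mathrm{diag}(1,X^{k-1},\dots,X^{\ell(k-1)})$. For $v\in\mathbb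 F_q[X]^m$, $\deg v=\max_i\deg v_i$, $\mathrm{LP}(v)=\max\{i:\deg v_i=\deg v\}$; a matrix is in weak Popov form if its rows have pairwise different leading positions. For a square matrix $V$ with rows $v_i$, $\deg V=\sum_i\deg v_i$ and $\Delta(V)=\deg V-\deg\det V$. *)

(* Defs.v *)
From HB Require Import structures.
From mathcomp Require Import all_boot all_order all_algebra.
Set Implicit Arguments. Unset Strict Implicit. Unset Printing Implicit Defensive.
Import Order.TTheory GRing.Theory Num.Theory.
Local Open Scope ring_scope.

Section Defs.
Variable F : fieldType.

(* Bivariate polynomials Q(X,Y) = \sum_t Q_t(X) Y^t are elements of
   {poly {poly F}}: the outer variable is Y, coefficients Q_t lie in F[X]. *)

Definition is_GRS_codeword (n k : nat) (alpha w r : 'I_n -> F) : Prop :=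
  exists f : {poly F}, (size f <= k)%N /\ forall i, r i = w i * f.[alpha i].

Definition shiftXY (Q : {poly {poly F}}) (a b : F) : {poly {poly F}} :=
  (map_poly (fun p : {poly F} => p \Po ('X + a%:P)) Q) \Po ('X + (b%:P)%:P).

Definition vanishes_mult (Q : {poly {poly F}}) (a b : F) (s : nat) : Prop :=
  forall u v : nat, (u + v < s)%N -> ((shiftXY Q a b)`_v)`_u = 0.

Definition in_M (n s l : nat) (alpha w r : 'I_n -> F) (Q : {poly {poly F}}) : Prop :=
  (size Q <= l.+1)%N /\ forall i, vanishes_mult Q (alpha i) (r i / w i) s.

Definition rowpoly (m : nat) (v : 'rV[{poly F}]_m) : {poly {poly F}} :=
  \sum_(t < m) (v ord0 t)%:P * 'X^t.

Definition represents_basis_M (n s l : nat) (alpha w r : 'I_n -> F)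
    (B : 'M[{poly F}]_(l.+1)) : Prop :=
  [/\ forall i, in_M s l alpha w r (rowpoly (row i B)),
      forall c : 'I_l.+1 -> {poly F},
        \sum_i (c i)%:P * rowpoly (row i B) = 0 -> forall i, c i = 0 &
      forall Q, in_M s l alpha w r Q ->
        exists c : 'I_l.+1 -> {poly F}, Q = \sum_i (c i)%:P * rowpoly (row i B)].

Definition W_mx (k l : nat) : 'M[{poly F}]_(l.+1) :=
  diag_mx (\row_(t < l.+1) 'X^(t * (k.-1))).

(* row degree: deg v = max_i deg v_i ; we use sizes (size = deg + 1, size 0 = 0)
   so that zero entries never attain the maximum of a nonzero row *)
Definition rowsize (m : nat) (v : 'rV[{poly F}]_m) : nat := \max_j size (v ord0 j).
Definition rdeg (m : nat) (v : 'rV[{poly F}]_m) : nat := (rowsize v).-1.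

Definition LP (m : nat) (v : 'rV[{poly F}]_m) : nat :=
  \max_(j | size (v ord0 j) == rowsize v) (j : nat).

Definition weak_popov (m p : nat) (V : 'M[{poly F}]_(m, p)) : Prop :=
  forall i j : 'I_m, i != j -> LP (row i V) != LP (row j V).

Definition mxdeg (m : nat) (V : 'M[{poly F}]_m) : nat := \sum_i rdeg (row i V).
Definition orthodefect (m : nat) (V : 'M[{poly F}]_m) : int :=
  (mxdeg V)%:Z - ((size (\det V)).-1)%:Z.

Definition CI_mx (s l : nat) (R : {poly F}) (B : 'M[{poly F}]_(l.+1)) :
    'M[{poly F}]_(l.+2) :=
  let P : {poly {poly F}} := 'X^((l - s).+1) * ('X - R%:P) ^+ s in
  \matrix_(i < l.+2, j < l.+2)
    if ((i < l.+1) && (j < l.+1))%N then B (inord i) (inord j)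
    else if (i == l.+1 :> nat) then P`_j else 0.

End Defs.
Arguments represents_basis_M [F n] s l alpha w r B.
Arguments in_M [F n] s l alpha w r Q.

(* Main.v *)
Require Import Defs.
From HB Require Import structures.
From mathcomp Require Import all_boot all_order all_algebra perm.
From mathcomp Require Import zify.
Import Order.TTheory GRing.Theory Num.Theory.
Local Open Scope ring_scope.

Section Aux.
Variable F : fieldType.

Lemma coefM_top (p q : {poly F}) a b :
  (size p <= a.+1)%N -> (size q <= b.+1)%N -> (p * q)`_(a + b) = p`_a * q`_b.
Proof.
move=> sp sq; rewrite coefM (bigD1 (Ordinal (leq_addr b a.+1))) //= big1 ?addr0.
  by rewrite addKn.
move=> [j hj] /= /negP nj; have {}nj : j != a by apply/negP=> /eqP E; apply: nj; apply/eqP/val_inj.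
case: (ltngtP j a) => [lt|gt|eq]; last by rewrite eq eqxx in nj.
  rewrite (leq_sizeP _ _ sq) ?mulr0 //; rewrite ltnS in hj; lia.
by rewrite (leq_sizeP _ _ sp) ?mul0r.
Qed.

Lemma prod_top (I : finType) (p : I -> {poly F}) (d : I -> nat) :
  (forall i, size (p i) <= (d i).+1)%N ->
  (size (\prod_i p i)%R <= (\sum_i d i).+1)%N /\
  (\prod_i p i)`_(\sum_i d i) = \prod_i (p i)`_(d i).
Proof.
move=> hp.
elim/big_rec3: _ => [|i z y x _ [sx cx]].
  by rewrite size_poly1 coef1.
split.
  apply: leq_trans (size_mul_leq _ _) _.
  have := hp i; lia.
by rewrite coefM_top // cx.
Qed.


Lemma sign_coef (b : bool) (p : {poly F}) j : ((-1) ^+ b * p)`_j = (-1) ^+ b * p`_j.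
Proof. by rewrite !mulr_sign; case: b; rewrite ?coefN. Qed.

Lemma sign_size (b : bool) (p : {poly F}) : size ((-1) ^+ b * p) = size p.
Proof. by rewrite mulr_sign; case: b; rewrite ?size_polyN. Qed.

Lemma perm_gt (m : nat) (s t : 'S_m) : s != t -> exists i, (t i < s i)%N.
Proof.
move=> neq; apply/existsP; apply: contraR neq; rewrite negb_exists => /forallP H.
have le : forall i, (s i <= t i)%N by move=> i; have := H i; rewrite -leqNgt.
have eqs : (\sum_i (s i : nat) = \sum_i (t i : nat))%N.
  have E (u : 'S_m) : (\sum_i (u i : nat) = \sum_(i : 'I_m) (i : nat))%N.
    by rewrite [RHS](reindex_inj (@perm_inj _ u)).
  by rewrite !E.
have : (\sum_i (t i - s i) == 0)%N by rewrite sumnB // eqs subnn.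
rewrite sum_nat_eq0 => /forallP H2; apply/eqP/permP => i.
apply/val_inj/eqP; rewrite eqn_leq le /=; by have := H2 i; rewrite /= subn_eq0 => ->.
Qed.


Lemma bigmax_ord_att m (P : pred 'I_m) j0 : P j0 ->
  exists2 j : 'I_m, P j & (\max_(j | P j) (j:nat))%N = j.
Proof.
move=> Pj0.
have [|j Pj E] := @eq_bigmax_cond _ P (fun j => (j:nat)).
  by apply/card_gt0P; exists j0.
by exists j.
Qed.

Lemma wp_det m (V : 'M[{poly F}]_m) : weak_popov V ->
  (forall i, 0 < rowsize (row i V))%N -> size (\det V) = (mxdeg V).+1.
Proof.
move=> wp nz.
pose d i := rdeg (row i V).
have rs i : rowsize (row i V) = (d i).+1 by rewrite /d /rdeg prednK.
have szle i j : (size (V i j) <= (d i).+1)%N.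
  by rewrite -rs /rowsize; have := @leq_bigmax _ (fun j => size ((row i V) ord0 j)) j; rewrite mxE.
pose lp i := LP (row i V).
have lpm i : (lp i < m)%N.
  have m0 : (0 < m)%N by case: i => i /=; lia.
  apply: leq_trans (_ : m.-1.+1 <= m)%N; last by lia.
  rewrite ltnS; apply/bigmax_leqP => j _; case: j => j /=; lia.
have att i : exists2 j : 'I_m, size (V i j) = (d i).+1 & lp i = j.
  have c0 : (0 < #|'I_m|)%N by rewrite card_ord; case: i => i /=; lia.
  have [j0 E0] := bigop.eq_bigmax (fun j => size ((row i V) ord0 j)) c0.
  have [j Pj Ej] := @bigmax_ord_att _ (fun j => size ((row i V) ord0 j) == rowsize (row i V)) j0 (introT eqP (esym E0)).
  exists j => //; move: Pj; rewrite mxE rs => /eqP //.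
have gtlp i (j : 'I_m) : (lp i < j)%N -> (size (V i j) <= d i)%N.
  move=> lt; have := szle i j; rewrite leq_eqVlt ltnS => /orP [/eqP E|//].
  have : (j <= lp i)%N.
    by apply: (@leq_bigmax_cond _ (fun j => size ((row i V) ord0 j) == rowsize (row i V)) (fun j => (j:nat)) j); rewrite mxE rs E.
  lia.
pose f i := Ordinal (lpm i).
have finj : injective f.
  move=> i j /(congr1 val) /= E; case: (eqVneq i j) => // /wp.
  by move: E; rewrite /lp => ->; rewrite eqxx.
pose pi := perm finj.
have fpi i : size (V i (pi i)) = (d i).+1.
  rewrite permE; have [j Sj Ej] := att i.
  by have -> : f i = j by apply/val_inj; rewrite /= Ej.
pose D := (\sum_i d i)%N.
have coefD : (\det V)`_D = (-1) ^+ pi * \prod_i (V i (pi i))`_(d i).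
  rewrite /D /determinant coef_sum (bigD1 pi) //= [X in _ + X]big1 ?addr0.
    by rewrite sign_coef (@prod_top _ _ _ (fun i => szle i (pi i))).2.
  move=> s nsp; rewrite sign_coef (@prod_top _ _ _ (fun i => szle i (s i))).2.
  have [i lt] := @perm_gt _ _ _ nsp.
  rewrite (bigD1 i) //= (leq_sizeP _ _ (gtlp _ _ _)) ?mul0r ?mulr0 //.
  by move: lt; rewrite permE.
have cnz : (\det V)`_D != 0.
  rewrite coefD mulf_neq0 ?signr_eq0 //; apply/prodf_neq0 => i _.
  have := fpi i => E.
  have : lead_coef (V i (pi i)) != 0 by rewrite lead_coef_eq0 -size_poly_gt0 E.
  by rewrite lead_coefE E.
apply/eqP; rewrite eqn_leq; apply/andP; split.
  rewrite /determinant; apply: leq_trans (size_sum _ _ _) _.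
  apply/bigmax_leqP => s _; rewrite sign_size.
  exact: (@prod_top _ _ _ (fun i => szle i (s i))).1.
rewrite ltnNge; apply/negP => /leq_sizeP H.
by move: cnz; rewrite H ?eqxx.
Qed.

End Aux.

Lemma rowij (R : Type) m n (A : 'M[R]_(m, n)) i j : row i A ord0 j = A i j.
Proof. by rewrite mxE. Qed.

Theorem lemma8 (F : finFieldType) (n k s l : nat)
    (alpha w r : 'I_n -> F) (R : {poly F}) (B : 'M[{poly F}]_(l.+1)) :
  (1 <= k)%N -> (k < n)%N -> (n < #|F|)%N ->
  injective alpha -> (forall i, alpha i != 0) -> (forall i, w i != 0) ->
  (0 < s)%N -> (s <= l)%N ->
  (size R <= n)%N -> (forall i, R.[alpha i] = r i / w i) ->
  ~ is_GRS_codeword k alpha w r ->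
  represents_basis_M s l alpha w r B ->
  weak_popov (B *m W_mx F k l) ->
  orthodefect (CI_mx s R B *m W_mx F k l.+1)
    = s%:Z * (((size R).-1)%:Z - k%:Z + 1) /\
  s%:Z * (((size R).-1)%:Z - k%:Z + 1) <= s%:Z * (n%:Z - k%:Z).
Proof.
move=> k1 kn nq ainj a0 w0 s0 sl szR Rev ncw basis wp.
have hk : (k < size R)%N.
  rewrite ltnNge; apply/negP => hs; apply: ncw; exists R; split => // i.
  by rewrite Rev mulrC divfK.
set dR := (size R).-1.
have dRk : (k <= dR)%N by rewrite /dR; lia.
set BW := B *m W_mx F k l.
set CW := CI_mx s R B *m W_mx F k l.+1.
set a := (l - s).+1.
set Q : {poly {poly F}} := ('X - R%:P) ^+ s.
have BWE i j : BW i j = B i j * 'X^(j * k.-1) by rewrite /BW mul_mx_diag !mxE.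
have CWE i j : CW i j = CI_mx s R B i j * 'X^(j * k.-1) by rewrite /CW mul_mx_diag !mxE.
have CWlo (i j : 'I_l.+2) : (i < l.+1)%N -> (j < l.+1)%N -> CW i j = BW (inord i) (inord j).
  by move=> hi hj; rewrite CWE BWE /CI_mx mxE hi hj /= inordK.
have CWlast (i : 'I_l.+2) : (i < l.+1)%N -> CW i ord_max = 0.
  move=> hi; rewrite CWE /CI_mx mxE /= ltnn andbF.
  by rewrite (_ : (i == l.+1 :> nat) = false) ?mul0r //; apply/negbTE; rewrite neq_ltn hi.
have CWmax j : CW ord_max j = ('X^a * Q)`_j * 'X^(j * k.-1).
  by rewrite CWE /CI_mx mxE /= ltnn /= eqxx.
have nzr i : (0 < rowsize (row i BW))%N.
  rewrite lt0n; apply/negP => /eqP z.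
  have Bz j : B i j = 0.
    have : (size ((row i BW) ord0 j) <= 0)%N.
      apply: (@leq_trans (rowsize (row i BW))); last by rewrite z.
      exact: (@leq_bigmax _ (fun j => size ((row i BW) ord0 j)) j).
    rewrite leqn0 size_poly_eq0 mxE BWE mulf_eq0 => /orP [/eqP //|].
    by rewrite expf_eq0 polyX_eq0 andbF.
  case: basis => _ indep _.
  have := indep (fun j => (j == i)%:R) => H.
  have : (i == i)%:R = 0 :> {poly F}.
    apply: H; rewrite (bigD1 i) //= big1 ?addr0.
      rewrite /rowpoly big1 ?mulr0 // => j _; by rewrite mxE Bz mul0r.
    by move=> j /negbTE ->; rewrite mul0r.
  by rewrite eqxx => /eqP; rewrite oner_eq0.
have QE : Q`_s = 1.
  have /monicP := monic_exp s (monicXsubC R); by rewrite lead_coefE size_exp_XsubC.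
have detC : \det CW = 'X^(l.+1 * k.-1) * \det BW.
  rewrite (expand_det_col _ ord_max) (bigD1 ord_max) //= [X in _ + X]big1 ?addr0.
    rewrite CWmax coefXnM ifN; last by rewrite /a /= -leqNgt; lia.
    rewrite (_ : (l.+1 - a)%N = s); last by rewrite /a; lia.
    rewrite QE mul1r /cofactor /= addnn -signr_odd odd_double expr0 mul1r.
    congr (_ * \det _); apply/matrixP => i j; rewrite [LHS]mxE [LHS]mxE.
    rewrite CWlo; last 2 first.
    - by rewrite lift_max ltn_ord.
    - by rewrite lift_max ltn_ord.
    by rewrite !lift_max !inord_val.
  move=> i ni; rewrite CWlast ?mul0r //.
  have := ltn_ord i; move: ni; rewrite -val_eqE /=; lia.
have dBW := @wp_det _ _ BW wp nzr.
have sdetC : (size (\det CW)).-1 = (l.+1 * k.-1 + mxdeg BW)%N.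
  rewrite detC mulrC size_mulXn ?dBW ?addnS //.
  by rewrite -size_poly_gt0 dBW.
have rowlo (i : 'I_l.+1) : rdeg (row (widen_ord (leqnSn _) i) CW) = rdeg (row i BW).
  rewrite /rdeg /rowsize big_ord_recr /= rowij CWlast ?size_poly0 ?maxn0 /=; last exact: ltn_ord.
  congr (_.-1); apply: eq_bigr => j _; rewrite !rowij CWlo /= ?inord_val //; exact: ltn_ord.
have mxdC : mxdeg CW = (mxdeg BW + rdeg (row ord_max CW))%N.
  by rewrite /mxdeg big_ord_recr /=; congr (_ + _)%N; apply: eq_bigr => i _; exact: rowlo.
have Rnz : - R != 0 by rewrite oppr_eq0 -size_poly_gt0; exact: (leq_ltn_trans (leq0n k) hk).
have Q0 : Q`_0 = (-R) ^+ s by rewrite -horner_coef0 horner_exp hornerXsubC sub0r.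
have sRs : size ((-R) ^+ s) = (s * dR).+1.
  have E := size_exp (-R) s; rewrite size_polyN -/dR in E.
  have pos : (0 < size ((-R) ^+ s))%N by rewrite size_poly_gt0 expf_neq0.
  by rewrite -(prednK pos) E mulnC.
have Qsz (j : nat) : (size (Q`_j)%R <= (s - j) * dR + 1)%N.
  rewrite /Q (addrC 'X) exprDn coef_sum.
  apply: leq_trans (size_sum _ _ _) _; apply/bigmax_leqP => i _.
  rewrite coefMn -polyCN -polyC_exp coefCM coefXn.
  apply: (@leq_trans (size ((-R) ^+ (s - i) * (j == i)%:R))).
    by apply/leq_sizeP => t ht; rewrite coefMn nth_default ?mul0rn.
  case: eqP => [->|_]; rewrite ?mulr1 ?mulr0 ?size_poly0 //.
  rewrite (leq_trans (leqSpred _)) // size_exp size_polyN -/dR addn1 mulnC //.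
have aj : (a < l.+2)%N by rewrite /a; lia.
have rsmax : rowsize (row ord_max CW) = (s * dR + a * k.-1).+1.
  apply/eqP; rewrite eqn_leq; apply/andP; split.
    apply/bigmax_leqP => j _; rewrite rowij CWmax coefXnM.
    case: ifP => hj; first by rewrite mul0r size_poly0.
    apply: leq_trans (size_mul_leq _ _) _; rewrite size_polyXn.
    have hQ := Qsz (j - a)%N.
    have jl := ltn_ord j.
    set i := (j - a)%N in hQ *.
    have ji : (j : nat) = (a + i)%N by rewrite /i; lia.
    have hii : (i <= s)%N by rewrite /i /a; lia.
    have e1 : (j * k.-1 = a * k.-1 + i * k.-1)%N by rewrite ji mulnDl.
    have e2 : (i * k.-1 <= i * dR)%N by rewrite leq_mul2l; apply/orP; right; lia.
    have e3 : ((s - i) * dR + i * dR = s * dR)%N by rewrite -mulnDl subnK.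
    rewrite e1; apply: (@leq_trans ((s - i) * dR + 1 + (a * k.-1 + i * k.-1))%N); first by rewrite addnS /= leq_add2r.
    move: e2 e3; generalize (a * k.-1)%N (i * k.-1)%N (s * dR)%N ((s - i) * dR)%N (i * dR)%N => *; lia.
  apply: (@leq_trans (size (row ord_max CW ord0 (Ordinal aj)))); last first.
    exact: (@leq_bigmax _ (fun j => size (row ord_max CW ord0 j)) _).
  rewrite rowij CWmax coefXnM /= ltnn subnn Q0 size_mulXn; last first.
    by rewrite -size_poly_gt0 sRs.
  by rewrite sRs addnS addnC.
have E1 : (l.+1 * k.-1 = a * k.-1 + s * k.-1)%N by rewrite -mulnDl /a; congr (_ * _)%N; lia.
have dRn : (dR < n)%N by rewrite /dR; lia.
rewrite /orthodefect mxdC sdetC /rdeg rsmax /= E1.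
generalize (mxdeg BW) (a * k.-1)%N => M A.
split; nia.
Qed.
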